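(* There exists a function $\ell\in C^2(\overline{\mathcal{S}})$ with $\ell<0$ on $\overline{\mathcal{S}}$ and $\ell(x,y)\to-\infty$ as $\|(x,y)\|\to\infty$ within $\overline{\mathcal{S}}$, which is a strict classical subsolution of the HJB inequality in $\mathcal{S}$, i.e. for all $(x,y)\in\mathcal{S}$: $$\mathcal{L}\ell(x,y)<0,\qquad -(1-\mu)\ell_x(x,y)+\ell_y(x,y)<0,\qquad \ell_x(x,y)-(1-\lambda)\ell_y(x,y)<0.$$ (For instance, $\ell(x,y)=-\frac{(x+ky-b+1)^p}{p}$ with any $k\in(1-\mu,\frac{1}{1-\lambda})$ and $p\in(0,1)$ sufficiently small.)
   Context: Constants $r>0$, $\alpha>r$, $\sigma>0$, $\beta>0$, $\lambda,\mu\in(0,1)$, $c>0$, $b<c/r$. $L(x,y):=x+(1-\mu)y^+-\frac{1}{1-\lambda}y^-$, $\mathcal{S}_a:=\{(x,y)\in\mathbb{R}^2:L(x,y)>a\}$, $\mathcal{S}:=\mathcal{S}_b\setminus\overline{\mathcal{S}_{c/r}}$ (closures in $\mathbb{R}^2$). For $\varphi\in C^2$, $\mathcal{L}\varphi:=\beta\varphi-(rx-c)\varphi_x-\alpha y\varphi_y-\frac12\sigma^2y^2\varphi_{yy}$. *)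

(* Defs.v *)
From Stdlib Require Import Reals Lra.
Open Scope R_scope.

Definition Lfun (lam mu x y : R) : R :=
  x + (1 - mu) * Rmax y 0 - / (1 - lam) * Rmax (- y) 0.

(* S = S_b \ closure(S_{c/r}) ; since L is continuous and strictly increasing
   in x, closure(S_{c/r}) = {L >= c/r}, so S = {b < L < c/r}.  We nevertheless
   define it literally with the topological closure. *)
Definition in_closure (P : R -> R -> Prop) (x y : R) : Prop :=
  forall eps, 0 < eps -> exists x' y', P x' y' /\ (x' - x)^2 + (y' - y)^2 < eps^2.

Definition S_a (lam mu a : R) (x y : R) : Prop := Lfun lam mu x y > a.

Definition Sset (lam mu b c r : R) (x y : R) : Prop :=
  S_a lam mu b x y /\ ~ in_closure (S_a lam mu (c / r)) x y.

Definition open2 (U : R -> R -> Prop) : Prop :=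
  forall x y, U x y -> exists eps, 0 < eps /\
    forall x' y', (x' - x)^2 + (y' - y)^2 < eps^2 -> U x' y'.

Definition cont2_on (U : R -> R -> Prop) (g : R -> R -> R) : Prop :=
  forall x y, U x y -> forall eps, 0 < eps -> exists del, 0 < del /\
    forall x' y', U x' y' -> (x' - x)^2 + (y' - y)^2 < del^2 ->
      Rabs (g x' y' - g x y) < eps.

Definition C2_on (U : R -> R -> Prop) (f fx fy fxx fxy fyx fyy : R -> R -> R) : Prop :=
  (forall x y, U x y ->
     derivable_pt_lim (fun t => f t y) x (fx x y) /\
     derivable_pt_lim (fun t => f x t) y (fy x y) /\
     derivable_pt_lim (fun t => fx t y) x (fxx x y) /\
     derivable_pt_lim (fun t => fx x t) y (fxy x y) /\
     derivable_pt_lim (fun t => fy t y) x (fyx x y) /\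
     derivable_pt_lim (fun t => fy x t) y (fyy x y)) /\
  cont2_on U f /\ cont2_on U fx /\ cont2_on U fy /\
  cont2_on U fxx /\ cont2_on U fxy /\ cont2_on U fyx /\ cont2_on U fyy.

Definition Lop (beta r c alpha sigma : R) (f fx fy fyy : R -> R -> R) (x y : R) : R :=
  beta * f x y - (r * x - c) * fx x y - alpha * y * fy x y
  - / 2 * sigma ^ 2 * y ^ 2 * fyy x y.

(* Main.v *)
Require Import Defs.
From Stdlib Require Import Reals Lra Psatz.
From Coquelicot Require Import Coquelicot.
Open Scope R_scope.

Lemma sq_bound (a e : R) : 0 < e -> a^2 < e^2 -> -e < a < e.
Proof. intros He H. split; nra. Qed.

Lemma lin_small (a c x y x' y' e : R) : 0 < e ->
  (x' - x)^2 + (y' - y)^2 < e^2 ->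
  Rabs (a*(x'-x) + c*(y'-y)) <= (Rabs a + Rabs c) * e.
Proof.
  intros He H.
  pose proof (pow2_ge_0 (x'-x)). pose proof (pow2_ge_0 (y'-y)).
  assert (Hx : (x'-x)^2 < e^2) by lra.
  assert (Hy : (y'-y)^2 < e^2) by lra.
  apply sq_bound in Hx; auto. apply sq_bound in Hy; auto.
  assert (Ax : Rabs (x'-x) <= e) by (apply Rabs_le; lra).
  assert (Ay : Rabs (y'-y) <= e) by (apply Rabs_le; lra).
  eapply Rle_trans. apply Rabs_triang.
  rewrite !Rabs_mult.
  assert (0 <= Rabs a) by apply Rabs_pos.
  assert (0 <= Rabs c) by apply Rabs_pos.
  nra.
Qed.

Lemma closure_lin (P : R -> R -> Prop) (a c d : R) :
  (forall x y, P x y -> 0 <= a*x + c*y + d) ->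
  forall x y, in_closure P x y -> 0 <= a*x + c*y + d.
Proof.
  intros HP x y Hc.
  destruct (Rle_lt_dec 0 (a*x+c*y+d)) as [h|h]; auto.
  assert (0 <= Rabs a) by apply Rabs_pos.
  assert (0 <= Rabs c) by apply Rabs_pos.
  set (e := - (a*x+c*y+d) / (Rabs a + Rabs c + 1)).
  assert (He : 0 < e).
  { unfold e. apply Rdiv_lt_0_compat; lra. }
  destruct (Hc e He) as [x' [y' [HP' Hd]]].
  pose proof (lin_small a c x y x' y' e He Hd) as Hs.
  pose proof (Rle_abs (a*(x'-x) + c*(y'-y))).
  pose proof (HP _ _ HP').
  assert (Heq : (Rabs a + Rabs c + 1) * e = - (a*x+c*y+d)).
  { unfold e. field. lra. }
  nra.
Qed.

Lemma open_lin (k d : R) : open2 (fun x y => 0 < x + k*y + d).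
Proof.
  intros x y Hu.
  assert (0 <= Rabs k) by apply Rabs_pos.
  exists ((x + k*y + d) / (2 * (1 + Rabs k))). split.
  { apply Rdiv_lt_0_compat; lra. }
  intros x' y' Hd.
  assert (He : 0 < (x + k*y + d) / (2 * (1 + Rabs k))) by (apply Rdiv_lt_0_compat; lra).
  pose proof (lin_small 1 k x y x' y' _ He Hd) as Hs.
  rewrite Rabs_R1 in Hs.
  pose proof (Rle_abs (- (1*(x'-x) + k*(y'-y)))). rewrite Rabs_Ropp in H0.
  assert (Heq : (1 + Rabs k) * ((x + k*y + d) / (2 * (1 + Rabs k))) = (x+k*y+d)/2).
  { field. lra. }
  lra.
Qed.

Lemma cont_lin (G : R -> R) (k d : R) :
  (forall t, 0 < t -> ex_derive G t) ->
  cont2_on (fun x y => 0 < x + k*y + d) (fun x y => G (x + k*y + d)).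
Proof.
  intros HG x y Hu eps He.
  assert (Hc : continuity_pt G (x + k*y + d)).
  { apply continuity_pt_filterlim. apply (@ex_derive_continuous R_AbsRing R_NormedModule). apply HG. exact Hu. }
  destruct (Hc eps He) as [alp [Halp H]].
  assert (0 <= Rabs k) by apply Rabs_pos.
  exists (alp / (2 * (1 + Rabs k))). split.
  { apply Rdiv_lt_0_compat; lra. }
  intros x' y' _ Hd.
  assert (He' : 0 < alp / (2 * (1 + Rabs k))) by (apply Rdiv_lt_0_compat; lra).
  pose proof (lin_small 1 k x y x' y' _ He' Hd) as Hs.
  rewrite Rabs_R1 in Hs.
  assert (Heq : (1 + Rabs k) * (alp / (2 * (1 + Rabs k))) = alp/2).
  { field. lra. }
  destruct (Req_dec (x + k*y + d) (x' + k*y' + d)) as [E|E].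
  - rewrite <- E. rewrite Rminus_diag, Rabs_R0. exact He.
  - apply (H (x' + k*y' + d)). split.
    + split; [exact I | exact E].
    + simpl. unfold R_dist.
      replace (x' + k*y' + d - (x + k*y + d)) with (1*(x'-x) + k*(y'-y)) by ring.
      lra.
Qed.

Theorem mainTheorem13 :
  forall (r alpha sigma beta lam mu c b : R),
    0 < r -> alpha > r -> 0 < sigma -> 0 < beta ->
    0 < lam < 1 -> 0 < mu < 1 -> 0 < c -> b < c / r ->
    exists (l lx ly lxx lxy lyx lyy : R -> R -> R) (U : R -> R -> Prop),
      open2 U /\
      (forall x y, in_closure (Sset lam mu b c r) x y -> U x y) /\
      C2_on U l lx ly lxx lxy lyx lyy /\
      (forall x y, in_closure (Sset lam mu b c r) x y -> l x y < 0) /\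
      (forall M, exists R0, forall x y, in_closure (Sset lam mu b c r) x y ->
          x ^ 2 + y ^ 2 > R0 ^ 2 -> l x y < M) /\
      (forall x y, Sset lam mu b c r x y ->
          Lop beta r c alpha sigma l lx ly lyy x y < 0 /\
          - (1 - mu) * lx x y + ly x y < 0 /\
          lx x y - (1 - lam) * ly x y < 0).
Proof.
  intros r alpha sigma beta lam mu c b Hr Ha Hs Hb Hlam Hmu Hc Hbc.
  set (il := / (1 - lam)).
  assert (Hil1 : (1 - lam) * il = 1) by (unfold il; field; lra).
  assert (Hil : 1 < il) by nra.
  set (k := ((1 - mu) + il) / 2).
  set (dl := (il - (1 - mu)) / 2).
  assert (Hdl : 0 < dl) by (unfold dl; lra).
  assert (Hk : 0 < k) by (unfold k; lra).
  set (A := r * il + alpha * k).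
  assert (HA : 0 <= A) by (unfold A; nra).
  set (q := A / (beta * dl)).
  assert (Hq : q * (beta * dl) = A) by (unfold q; field; nra).
  assert (Hq0 : 0 <= q).
  { unfold q. apply Rmult_le_pos; [lra | left; apply Rinv_0_lt_compat; nra]. }
  set (D := exp (q + 1)).
  assert (HD1 : 1 < D).
  { unfold D. pose proof (exp_increasing 0 (q+1)) as He0. rewrite exp_0 in He0. apply He0. lra. }
  assert (HlnD : ln D = q + 1) by (unfold D; apply ln_exp).
  set (d := D - b).
  assert (HS : forall x y, Sset lam mu b c r x y ->
     dl * Rabs y < x + k*y - b /\ r * x - c + alpha * k * y <= A * Rabs y).
  { intros x y [H1 H2].
    unfold S_a, Lfun in H1. fold il in H1.
    assert (H3 : Lfun lam mu x y <= c / r).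
    { destruct (Rle_lt_dec (Lfun lam mu x y) (c/r)) as [h|h]; auto.
      exfalso. apply H2. intros eps He. exists x, y. split.
      - exact h.
      - nra. }
    unfold Lfun in H3. fold il in H3.
    assert (Hcr : r * (c / r) = c) by (field; lra).
    unfold Rmax in H1, H3.
    destruct (Rle_dec y 0); destruct (Rle_dec (-y) 0).
    - assert (y = 0) by lra. subst. rewrite Rabs_R0.
      assert (r * x <= r * (c/r)) by (apply Rmult_le_compat_l; lra). split; nra.
    - rewrite Rabs_left1 by lra.
      assert (E1 : k * y = ((1-mu)*y + il*y)/2) by (unfold k; field).
      assert (E2 : dl * - y = -(il*y - (1-mu)*y)/2) by (unfold dl; field).
      assert (E3 : A * - y = - (r * (il * y)) - alpha * (k * y)) by (unfold A; field).
      assert (E4 : r * x <= r * (c/r - il * y)) by (apply Rmult_le_compat_l; lra).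
      assert (E5 : 0 <= alpha * (k * - y)) by (apply Rmult_le_pos; [lra| apply Rmult_le_pos; lra]).
      split; nra.
    - rewrite Rabs_right by lra.
      assert (E1 : k * y = ((1-mu)*y + il*y)/2) by (unfold k; field).
      assert (E2 : dl * y = (il*y - (1-mu)*y)/2) by (unfold dl; field).
      assert (E3 : A * y = r * (il * y) + alpha * (k * y)) by (unfold A; field).
      assert (E4 : r * x <= r * (c/r - (1-mu) * y)) by (apply Rmult_le_compat_l; lra).
      assert (E5 : 0 <= r * ((1-mu) * y + il * y)) by (apply Rmult_le_pos; [lra| nra]).
      split; nra.
    - lra. }
  assert (HC : forall x y, in_closure (Sset lam mu b c r) x y ->
     0 <= x + (k - dl) * y + (- b) /\ 0 <= x + (k + dl) * y + (- b)).
  { intros x y Hcl.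
    assert (G1 : forall x0 y0, Sset lam mu b c r x0 y0 -> 0 <= 1 * x0 + (k - dl) * y0 + - b).
    { intros x0 y0 H0. destruct (HS _ _ H0) as [h _].
      pose proof (Rle_abs y0). nra. }
    assert (G2 : forall x0 y0, Sset lam mu b c r x0 y0 -> 0 <= 1 * x0 + (k + dl) * y0 + - b).
    { intros x0 y0 H0. destruct (HS _ _ H0) as [h _].
      pose proof (Rle_abs (- y0)) as h'. rewrite Rabs_Ropp in h'. nra. }
    pose proof (closure_lin _ _ _ _ G1 x y Hcl).
    pose proof (closure_lin _ _ _ _ G2 x y Hcl).
    lra. }
  exists (fun x y => - ln (x + k*y + d)),
         (fun x y => - / (x + k*y + d)),
         (fun x y => - (k * / (x + k*y + d))),
         (fun x y => / (x + k*y + d)^2),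
         (fun x y => k * / (x + k*y + d)^2),
         (fun x y => k * / (x + k*y + d)^2),
         (fun x y => k^2 * / (x + k*y + d)^2),
         (fun x y => 0 < x + k*y + d).
  split; [apply open_lin|].
  split.
  { intros x y Hcl. destruct (HC x y Hcl). unfold d. nra. }
  split.
  { split.
    - intros x y Hu. repeat split;
        (apply is_derive_Reals; auto_derive; [repeat split; lra | field; lra]).
    - repeat split.
      + apply (cont_lin (fun t => - ln t)). intros t Ht. auto_derive. lra.
      + apply (cont_lin (fun t => - / t)). intros t Ht. auto_derive. lra.
      + apply (cont_lin (fun t => - (k * / t))). intros t Ht. auto_derive. lra.
      + apply (cont_lin (fun t => / t ^ 2)). intros t Ht. auto_derive. nra.
      + apply (cont_lin (fun t => k * / t ^ 2)). intros t Ht. auto_derive. nra.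
      + apply (cont_lin (fun t => k * / t ^ 2)). intros t Ht. auto_derive. nra.
      + apply (cont_lin (fun t => k^2 * / t ^ 2)). intros t Ht. auto_derive. nra. }
  split.
  { intros x y Hcl. destruct (HC x y Hcl).
    assert (Hz : 1 < x + k*y + d) by (unfold d; nra).
    assert (Hl1 : ln 1 < ln (x + k*y + d)) by (apply ln_increasing; lra).
    rewrite ln_1 in Hl1. cbv beta. lra. }
  split.
  { intros M.
    set (W := exp (- M)).
    assert (HW : 0 < W) by apply exp_pos.
    set (Y := W / dl).
    assert (HY : Y * dl = W) by (unfold Y; field; lra).
    assert (HY0 : 0 <= Y) by (unfold Y; apply Rmult_le_pos; [lra | left; apply Rinv_0_lt_compat; lra]).
    set (X := W + k * Y + Rabs b).
    pose proof (Rle_abs b). pose proof (Rle_abs (-b)) as Hb'. rewrite Rabs_Ropp in Hb'.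
    assert (HX0 : 0 <= X) by (unfold X; pose proof (Rabs_pos b); nra).
    exists (X + Y). intros x y Hcl Hbig.
    destruct (HC x y Hcl) as [h1 h2].
    assert (Hw : W < x + k*y - b).
    { destruct (Rle_lt_dec (x + k*y - b) W) as [h|h]; auto.
      exfalso.
      assert (hy1 : y <= Y) by nra.
      assert (hy2 : - Y <= y) by nra.
      assert (hx1 : x <= X) by (unfold X; nra).
      assert (hx2 : - X <= x) by (unfold X; nra).
      assert (x^2 <= X^2) by nra.
      assert (y^2 <= Y^2) by nra.
      nra. }
    assert (Hlt : ln W < ln (x + k*y + d)).
    { apply ln_increasing; auto. unfold d. lra. }
    unfold W in Hlt. rewrite ln_exp in Hlt. cbv beta. lra. }
  intros x y HSxy.
  destruct (HS x y HSxy) as [h1 h2].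
  pose proof (Rabs_pos y) as Hay.
  set (z := x + k*y + d).
  assert (Hz : D + dl * Rabs y <= z) by (unfold z, d; lra).
  assert (Hz0 : 0 < z) by nra.
  assert (Hiz : 0 < / z) by (apply Rinv_0_lt_compat; lra).
  assert (Hzz : z * / z = 1) by (field; lra).
  assert (HDz : D <= z) by nra.
  assert (Hln : q + 1 <= ln z).
  { rewrite <- HlnD. destruct (Rle_lt_or_eq_dec _ _ HDz) as [h|h].
    - left. apply ln_increasing; lra.
    - right. rewrite h. reflexivity. }
  set (N := r * x - c + alpha * k * y).
  assert (HN : N < beta * ln z * z).
  { assert (beta * (q+1) * z <= beta * ln z * z).
    { apply Rmult_le_compat_r; [lra|]. apply Rmult_le_compat_l; lra. }
    assert (beta * (q+1) * (D + dl * Rabs y) <= beta * (q+1) * z)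
      by (apply Rmult_le_compat_l; nra).
    assert (E : beta * (q+1) * (D + dl * Rabs y) = A * Rabs y + beta * (dl * Rabs y) + beta * (q+1) * D)
      by (rewrite <- Hq; field).
    assert (0 <= beta * (dl * Rabs y)) by (apply Rmult_le_pos; [lra| apply Rmult_le_pos; lra]).
    assert (0 < beta * (q+1) * D) by (apply Rmult_lt_0_compat; [apply Rmult_lt_0_compat|]; lra).
    fold N in h2. lra. }
  assert (HN' : N * / z < beta * ln z).
  { apply (Rmult_lt_reg_r z); auto.
    replace (N * / z * z) with N by (field; lra). lra. }
  unfold Lop. cbv beta. fold z.
  split; [|split].
  - replace (beta * - ln z - (r * x - c) * - / z - alpha * y * - (k * / z) -
             / 2 * sigma ^ 2 * y ^ 2 * (k ^ 2 * / z ^ 2))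
      with (- beta * ln z + N * / z - / 2 * (sigma * y * k * / z) ^ 2)
      by (unfold N; field; lra).
    assert (0 <= (sigma * y * k * / z) ^ 2) by (apply pow2_ge_0).
    lra.
  - assert (1 - mu < k) by (unfold k; lra). nra.
  - assert ((1 - lam) * k < 1) by (unfold k; nra). nra.
Qed.
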